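(* Let $m\ge1$ and $\Lambda^{\pm}_m=\mathbb Z[x_1^{\pm1},\dots,x_m^{\pm1}]^{S_m}$. Then $\Lambda^{\pm}_m$ is isomorphic to each of the following commutative rings: (1) the ring $U^+_{m,0}$ generated over $\mathbb Z$ by $u_i$ ($i\ge1$) and $\hat v_i$ ($i\ge0$) subject to the relations $R_I(w)=0$ for all $I\in\mathbb Z^{m+1}$, where $w_i=u_i-\hat v_{-m-i}$ for $i\in\mathbb Z$, with the conventions $u_0=1$ and $u_i=\hat v_i=0$ for $i<0$; (2) the ring $U^{\pm}_{m,0}$ generated over $\mathbb Z$ by $t$, $u_i$ ($i\ge1$) and $v_i$ ($i\ge1$) subject to the relations $R_I(w)=0$ for all $I\in\mathbb Z^{m+1}$, where $w_i=u_i-tv_{-m-i}$ for $i\in\mathbb Z$, with the conventions $u_0=v_0=1$ and $u_i=v_i=0$ for $i<0$.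
   Context: For an infinite sequence $z=(z_i)_{i\in\mathbb Z}$ and a finite sequence of integers $I=(i_1,\dots,i_p)\in\mathbb Z^p$, set $R_I(z)=\det\big(z_{i_\alpha+\beta-1}\big)_{1\le\alpha,\beta\le p}$. *)

(* Defs.v *)
From HB Require Import structures.
From mathcomp Require Import all_boot all_order all_algebra all_fingroup.
From mathcomp Require Import fraction.
From mathcomp Require Import mpoly.
From Stdlib Require Import ClassicalEpsilon.
From mathcomp Require Import ring.

Set Implicit Arguments.
Unset Strict Implicit.
Unset Printing Implicit Defensive.

Import GRing.Theory.
Local Open Scope ring_scope.

Notation tofracF := (@FracField.tofrac _).
Local Notation "x %:F" := (tofracF x).

(* Laurent polynomial ring Z[x_1^{+-1},...,x_m^{+-1}] realised inside the
   fraction field of Z[x_1,...,x_m]. *)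
Definition Frac (m : nat) := {fraction {mpoly int[m]}}.

Definition xprod (m : nat) : {mpoly int[m]} := \prod_(i < m) 'X_i.

(* f is a symmetric Laurent polynomial: f = p / (x_1...x_m)^k with p a
   symmetric polynomial. *)
Definition is_symLaurent (m : nat) (f : Frac m) : Prop :=
  exists (k : nat) (p : {mpoly int[m]}),
    p \is symmetric /\ f = p%:F / (xprod m ^+ k)%:F.
Arguments is_symLaurent m f : clear implicits.

Definition symLaurent_pred (m : nat) : pred (Frac m) :=
  fun f => if excluded_middle_informative (is_symLaurent m f) then true else false.
Arguments symLaurent_pred m : clear implicits.

Lemma symLaurentP (m : nat) (f : Frac m) : reflect (is_symLaurent m f) (f \in symLaurent_pred m).
Proof.
rewrite /in_mem /= /symLaurent_pred.
by case: excluded_middle_informative => h; constructor.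
Qed.

Lemma xprod_sym m : xprod m \is symmetric.
Proof. by rewrite /xprod -mesymnnE mesym_sym. Qed.

Lemma xprod_neq0 m : (xprod m)%:F != 0 :> Frac m.
Proof. by rewrite tofrac_eq0 /xprod -mesymnnE mesym_neq0. Qed.


Lemma divB_same (F : fieldType) (x y a b : F) : a != 0 -> b != 0 ->
  x / a - y / b = (x * b - y * a) / (a * b).
Proof. by move=> a0 b0; field; rewrite a0 b0. Qed.

Lemma symLaurent_subring m : subring_closed (symLaurent_pred m).
Proof.
have nz k : (xprod m ^+ k)%:F != 0 :> Frac m.
  by rewrite rmorphXn expf_neq0 // xprod_neq0.
split.
- apply/symLaurentP; exists 0%N, 1; split; first exact: rpred1.
  by rewrite expr0 rmorph1 divr1.
- move=> f g /symLaurentP [k [p [sp ->]]] /symLaurentP [l [q [sq ->]]].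
  apply/symLaurentP; exists (k + l)%N, (p * xprod m ^+ l - q * xprod m ^+ k).
  split.
    by rewrite rpredB // rpredM // rpredX // xprod_sym.
  rewrite (divB_same _ _ (nz k) (nz l)) exprD.
  by rewrite !(rmorphB, rmorphM).
- move=> f g /symLaurentP [k [p [sp ->]]] /symLaurentP [l [q [sq ->]]].
  apply/symLaurentP; exists (k + l)%N, (p * q); split; first exact: rpredM.
  by rewrite exprD !rmorphM /= invfM mulrACA.
Qed.

HB.instance Definition _ (m : nat) :=
  GRing.isSubringClosed.Build (Frac m) (symLaurent_pred m) (symLaurent_subring m).

Record SymLaurent (m : nat) := SymLaurentSub {
  symLaurent_val : Frac m;
  _ : symLaurent_val \in symLaurent_pred m }.

HB.instance Definition _ m := [isSub for @symLaurent_val m].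
HB.instance Definition _ m := [Choice of SymLaurent m by <:].
HB.instance Definition _ m := [SubChoice_isSubComNzRing of SymLaurent m by <:].

(* R_I(z) = det (z_{i_alpha + beta - 1})_{1 <= alpha, beta <= p} *)
Definition RI (B : comPzRingType) (p : nat) (z : int -> B) (I : 'I_p -> int) : B :=
  \det (\matrix_(a < p, b < p) z (I a + (b : nat)%:Z)%R).

(* Rings given by generators and relations, via their universal property:
   A is the commutative ring generated by the family g : G -> A subject to
   the relations rel iff g satisfies rel and, for every commutative ring B
   and every family h : G -> B satisfying rel, there is exactly one ring
   morphism A -> B sending g to h. *)
Definition presents (A : comNzRingType) (G : Type) (g : G -> A)
  (rel : forall B : comPzRingType, (G -> B) -> Prop) : Prop :=
  rel A g /\
  forall (B : comPzRingType) (h : G -> B), rel B h ->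
    (exists f : {rmorphism A -> B}, forall i, f (g i) = h i) /\
    (forall f1 f2 : {rmorphism A -> B},
       (forall i, f1 (g i) = h i) -> (forall i, f2 (g i) = h i) -> f1 =1 f2).

(* useq c (i) = 1 if i = 0, c (i-1) if i >= 1, 0 if i < 0  (c k = x_{k+1}) *)
Definition useq (B : comPzRingType) (c : nat -> B) (i : int) : B :=
  match i with
  | Posz 0 => 1
  | Posz (S k) => c k
  | Negz _ => 0
  end.

Definition vseq (B : comPzRingType) (c : nat -> B) (i : int) : B :=
  match i with
  | Posz k => c k
  | Negz _ => 0
  end.

(* (1) generators u_i (i >= 1) : inl (i-1);  hat v_i (i >= 0) : inr i *)
Definition gensUplus := (nat + nat)%type.

Definition w_plus (m : nat) (B : comPzRingType) (h : gensUplus -> B) (i : int) : B :=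
  useq (fun k => h (inl k)) i - vseq (fun k => h (inr k)) (- (m%:Z) - i).

Definition rel_Uplus (m : nat) (B : comPzRingType) (h : gensUplus -> B) : Prop :=
  forall I : 'I_m.+1 -> int, RI (w_plus m h) I = 0.

(* (2) generators t : None;  u_i (i >= 1) : Some (inl (i-1));
       v_i (i >= 1) : Some (inr (i-1)) *)
Definition gensUpm := option (nat + nat)%type.

Definition w_pm (m : nat) (B : comPzRingType) (h : gensUpm -> B) (i : int) : B :=
  useq (fun k => h (Some (inl k))) i
  - h None * useq (fun k => h (Some (inr k))) (- (m%:Z) - i).

Definition rel_Upm (m : nat) (B : comPzRingType) (h : gensUpm -> B) : Prop :=
  forall I : 'I_m.+1 -> int, RI (w_pm m h) I = 0.
Arguments rel_Uplus m B h : clear implicits.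
Arguments rel_Upm m B h : clear implicits.

(* Main.v *)
Require Import Defs.
From HB Require Import structures.
From mathcomp Require Import all_boot all_order all_algebra all_fingroup.
From mathcomp Require Import fraction mpoly ring zify.
From Stdlib Require Import ClassicalEpsilon FunctionalExtensionality.
Set Implicit Arguments.
Unset Strict Implicit.
Unset Printing Implicit Defensive.
Import GRing.Theory.
Local Open Scope ring_scope.

Definition mkRM (A B : pzSemiRingType) (f : A -> B) (H1 : nmod_morphism f)
  (H2 : monoid_morphism f) : A -> B := f.
HB.instance Definition _ (A B : pzSemiRingType) (f : A -> B) H1 H2 := GRing.isNmodMorphism.Build A B (@mkRM A B f H1 H2) H1.
HB.instance Definition _ (A B : pzSemiRingType) (f : A -> B) H1 H2 := GRing.isMonoidMorphism.Build A B (@mkRM A B f H1 H2) H2.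

Section Rec.
Variable B : comPzRingType.
Variable m : nat.

Definition initw (w : int -> B) :=
  w 0 = 1 /\ forall i : nat, (0 < i < m)%N -> w (- (i%:Z)) = 0.

Definition recur (c : nat -> B) (w : int -> B) (k : int) :=
  \sum_(j < m.+1) c j * w (k - (j : nat)%:Z) = 0.

Fixpoint clist (w : int -> B) (n : nat) : seq B :=
  match n with
  | 0 => [:: 1]
  | n'.+1 => let s := clist w n' in
      rcons s (- \sum_(j < n'.+1) s`_j * w ((n'.+1)%:Z - (j : nat)%:Z))
  end.

Definition cseq w j := (clist w j)`_j.

Lemma size_clist w n : size (clist w n) = n.+1.
Proof. by elim: n => //= n IH; rewrite size_rcons IH. Qed.

Lemma nth_clist w n j : (j <= n)%N -> (clist w n)`_j = cseq w j.
Proof.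
elim: n => [|n IH]; first by rewrite leqn0 => /eqP ->.
rewrite leq_eqVlt => /orP [/eqP -> //|]; rewrite ltnS => hj.
by rewrite /= nth_rcons size_clist ltnS hj IH.
Qed.

Lemma cseq0 w : cseq w 0 = 1.
Proof. by []. Qed.

Lemma cseqS w n : cseq w n.+1 =
  - \sum_(j < n.+1) cseq w j * w ((n.+1)%:Z - (j : nat)%:Z).
Proof.
rewrite /cseq /= nth_rcons size_clist ltnn eqxx; congr (- _).
by apply: eq_bigr => j _; rewrite nth_clist // -ltnS.
Qed.

Lemma recur_split (c : nat -> B) (w : int -> B) (k : nat) : initw w -> (0 < k <= m)%N ->
  \sum_(j < m.+1) c j * w (k%:Z - (j : nat)%:Z) =
  c k + \sum_(j < k) c j * w (k%:Z - (j : nat)%:Z).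
Proof.
move=> [w0 wneg] /andP [k0 km].
rewrite -(big_mkord xpredT (fun j => c j * w (k%:Z - j%:Z))).
rewrite (big_cat_nat (n := k.+1)) //=.
rewrite [X in _ + X]big1_seq ?addr0; last first.
  move=> j /andP [_]; rewrite mem_index_iota => /andP [hj1 hj2].
  have -> : (k%:Z - (j : nat)%:Z) = - ((j - k)%N)%:Z by lia.
  by rewrite wneg ?mulr0 //; lia.
rewrite big_nat_recr //= subrr w0 mulr1 addrC big_mkord.
by [].
Qed.

Lemma cseq_recur_small (w : int -> B) (k : nat) : initw w -> (0 < k <= m)%N -> recur (cseq w) w k%:Z.
Proof.
move=> hi hk; rewrite /recur recur_split //.
case: k hk => // k _; rewrite cseqS; exact: addNr.
Qed.

Lemma recur_cseq (c : nat -> B) (w : int -> B) : initw w -> c 0%N = 1 ->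
  (forall k : nat, (0 < k <= m)%N -> recur c w k%:Z) ->
  forall j, (j <= m)%N -> c j = cseq w j.
Proof.
move=> hi c0 hr; elim/ltn_ind => -[|j] IH hj; first by rewrite c0.
have := hr j.+1 hj; rewrite /recur recur_split // => /eqP.
rewrite addr_eq0 => /eqP ->; rewrite cseqS; congr (- _).
by apply: eq_bigr => i _; rewrite IH // (leq_trans _ hj) // ltnW.
Qed.
End Rec.

Lemma cseq_morph (B B' : comPzRingType) (f : {rmorphism B -> B'}) w n :
  f (cseq w n) = cseq (f \o w) n.
Proof.
elim/ltn_ind: n => -[|n] IH; first by rewrite !cseq0 rmorph1.
rewrite !cseqS rmorphN rmorph_sum; congr (- _); apply: eq_bigr => j _.
by rewrite rmorphM IH.
Qed.

Section Det.
Variable B : comPzRingType.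
Variable m : nat.

Lemma sum_rev (c : nat -> B) (w : int -> B) (s : int) :
  \sum_(b < m.+1) w (s + (b : nat)%:Z) * c (m - b)%N =
  \sum_(j < m.+1) c j * w (s + m%:Z - (j : nat)%:Z).
Proof.
rewrite (reindex_inj rev_ord_inj) /=; apply: eq_bigr => j _.
rewrite mulrC subSS; congr (_ * w _).
  by congr c; have := ltn_ord j; lia.
by have := ltn_ord j; lia.
Qed.

Lemma RI_of_recur (c : nat -> B) (w : int -> B) : c 0%N = 1 ->
  (forall k, recur m c w k) -> forall I : 'I_m.+1 -> int, RI w I = 0.
Proof.
move=> c0 hr I; rewrite /RI.
set M := \matrix_(a < m.+1, b < m.+1) w (I a + (b : nat)%:Z).
pose x : 'cV[B]_m.+1 := \col_b c (m - b)%N.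
have Mx : M *m x = 0.
  apply/matrixP => a j; rewrite !mxE.
  under eq_bigr => b _ do rewrite !mxE.
  by rewrite sum_rev; apply: hr.
have := congr1 (mulmx (\adj M)) Mx.
rewrite mulmxA mul_adj_mx mul_scalar_mx mulmx0 => /matrixP /(_ ord_max 0).
by rewrite !mxE subnn c0 mulr1.
Qed.

Lemma sum_pick n (F : 'I_n -> B) (t : 'I_n) :
  \sum_(b < n) F b * (b == t)%:R = F t.
Proof.
rewrite (bigD1 t) //= eqxx mulr1 big1 ?addr0 // => b /negPf ->.
by rewrite mulr0.
Qed.

Lemma recur_of_RI (c : nat -> B) (w : int -> B) : initw m w ->
  (forall k : nat, (0 < k <= m)%N -> recur m c w k%:Z) ->
  (forall I : 'I_m.+1 -> int, RI w I = 0) -> forall k, recur m c w k.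
Proof.
move=> [w0 wneg] hs hRI k.
pose I : 'I_m.+1 -> int := fun a => if (a < m)%N then (a : nat)%:Z - m%:Z + 1
                                     else k - m%:Z.
have := hRI I; rewrite /RI.
set M := \matrix_(a < m.+1, b < m.+1) w (I a + (b : nat)%:Z).
pose E : 'M[B]_m.+1 := \matrix_(b, j) if (j < m)%N
       then (b == inord (m.-1 - j) :> 'I_m.+1)%:R else c (m - b)%N.
move=> dM.
have : \det (M *m E) = 0 by rewrite det_mulmx dM mul0r.
have NE : forall a j : 'I_m.+1, (M *m E) a j = if (j < m)%N
       then w (I a + (m.-1 - j)%N%:Z)
       else \sum_(j < m.+1) c j * w (I a + m%:Z - (j : nat)%:Z).
  move=> a j; rewrite mxE.
  case: ifP => hj.
    under eq_bigr => b _ do rewrite !mxE hj.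
    by rewrite sum_pick inordK //; lia.
  under eq_bigr => b _ do rewrite !mxE hj.
  by rewrite sum_rev.
rewrite det_trig; last first.
  apply/is_trig_mxP => i j hij; rewrite NE.
  have him : (i < m)%N by have := ltn_ord j; lia.
  rewrite /I him; case: ifP => hj.
    have -> : (i%:Z - m%:Z + 1 + (m.-1 - j)%N%:Z) = - ((j - i)%N)%:Z by lia.
    by apply: wneg; lia.
  have -> : (i%:Z - m%:Z + 1 + m%:Z) = (i.+1)%:Z by lia.
  by apply: hs.
rewrite big_ord_recr /= big1 ?mul1r.
  rewrite NE /= ltnn /I /= ltnn.
  by have -> : k - m%:Z + m%:Z = k by lia.
move=> i _; rewrite NE /= ltn_ord /I /= ltn_ord.
have -> : ((i : nat)%:Z - m%:Z + 1 + (m.-1 - i)%N%:Z) = 0 by have := ltn_ord i; lia.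
exact: w0.
Qed.
End Det.
Section Uniq.
Variable B : comPzRingType.
Variable m : nat.

Lemma recur_back (c : nat -> B) (w : int -> B) k : recur m c w k ->
  c m * w (k - m%:Z) = - \sum_(j < m) c j * w (k - (j : nat)%:Z).
Proof.
rewrite /recur big_ord_recr /= => /eqP; rewrite addrC addr_eq0 => /eqP ->.
by [].
Qed.

Lemma recur_fwd (c : nat -> B) (w : int -> B) k : c 0%N = 1 -> recur m c w k ->
  w k = - \sum_(j < m) c j.+1 * w (k - (j.+1 : nat)%:Z).
Proof.
move=> c0; rewrite /recur big_ord_recl /= c0 mul1r subr0 => /eqP.
by rewrite addr_eq0 => /eqP ->.
Qed.

Lemma rec_uniq (c : nat -> B) (ci : B) (w1 w2 : int -> B) :
  c 0%N = 1 -> ci * c m = 1 ->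
  (forall k, recur m c w1 k) -> (forall k, recur m c w2 k) ->
  (forall i : nat, (i < m)%N -> w1 (- i%:Z) = w2 (- i%:Z)) ->
  forall k, w1 k = w2 k.
Proof.
move=> c0 hci r1 r2 hin.
have back : forall i : nat, w1 (- i%:Z) = w2 (- i%:Z).
  elim/ltn_ind => i IH.
  case: (ltnP i m) => him; first exact: hin.
  have e1 := recur_back (r1 (m%:Z - i%:Z)).
  have e2 := recur_back (r2 (m%:Z - i%:Z)).
  have -> : - i%:Z = m%:Z - i%:Z - m%:Z by lia.
  rewrite -[w1 _]mul1r -[w2 _]mul1r -hci -!mulrA e1 e2; congr (ci * - _).
  apply: eq_bigr => j _; congr (_ * _).
  have -> : m%:Z - i%:Z - (j : nat)%:Z = - ((i - m + j)%N)%:Z by have := ltn_ord j; lia.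
  by apply: IH; have := ltn_ord j; lia.
have fwd : forall i : nat, w1 i%:Z = w2 i%:Z.
  elim/ltn_ind => -[|i] IH; first by have := back 0%N.
  rewrite (recur_fwd c0 (r1 _)) (recur_fwd c0 (r2 _)); congr (- _).
  apply: eq_bigr => j _; congr (_ * _).
  case: (leqP j.+1 i.+1) => hj.
    have -> : (i.+1)%:Z - (j.+1 : nat)%:Z = ((i.+1 - j.+1)%N)%:Z by lia.
    by apply: IH; lia.
  have -> : (i.+1)%:Z - (j.+1 : nat)%:Z = - ((j.+1 - i.+1)%N)%:Z by lia.
  exact: back.
case=> k; first exact: fwd.
have -> : Negz k = - ((k.+1)%:Z) by [].
exact: back.
Qed.
End Uniq.

Section Window.
Variable B : comPzRingType.
Variable n : nat.
Variables (c : nat -> B) (ci : B).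
Hypothesis c0 : c 0%N = 1.
Hypothesis hci : c n.+1 * ci = 1.

Definition Fw (y : nat -> B) : nat -> B := fun i =>
  if i == n then - \sum_(j < n.+1) c j.+1 * y (n - j)%N else y i.+1.
Definition Gw (y : nat -> B) : nat -> B := fun i =>
  if i == 0%N then - ci * (\sum_(j < n.+1) c j * y (n - j)%N) else y i.-1.

Lemma FGw y : Fw (Gw y) = y.
Proof.
apply: functional_extensionality => i; rewrite /Fw.
case: eqP => [->|hin]; last by rewrite /Gw.
have G0 : Gw y 0%N = - ci * (y n + \sum_(j < n) c j.+1 * y (n - j.+1)%N).
  by rewrite /Gw eqxx big_ord_recl /= subn0 c0 mul1r.
have Gj : forall j : 'I_n, Gw y (n - j)%N = y (n - j.+1)%N.
  move=> j; rewrite /Gw ifF; last by have := ltn_ord j; lia.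
  by congr y; lia.
rewrite big_ord_recr /= subnn G0.
under eq_bigr => j _ do rewrite Gj.
by rewrite mulNr mulrN mulrA hci mul1r opprB addrK.
Qed.

Definition b0 : nat -> B := fun i => (i == n)%:R.
Definition Ww (T : int) : nat -> B :=
  match T with Posz k => iter k Fw b0 | Negz k => iter k.+1 Gw b0 end.
Definition wL (T : int) : B := Ww T n.

Lemma Ww_succ T : Ww (T + 1) = Fw (Ww T).
Proof.
case: T => k.
  by have -> : Posz k + 1 = Posz k.+1 by lia.
case: k => [|k].
  by have -> : Negz 0 + 1 = 0 by []; rewrite /= FGw.
have -> : Negz k.+1 + 1 = Negz k by lia.
by rewrite /= FGw.
Qed.

Lemma Ww_pred T : Ww T = Fw (Ww (T - 1)).
Proof. by rewrite -Ww_succ subrK. Qed.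

Lemma Ww_shift d T : (d <= n)%N -> Ww T (n - d)%N = wL (T - d%:Z).
Proof.
elim: d T => [|d IH] T hd; first by rewrite subn0 subr0.
rewrite Ww_pred /Fw ifF; last by lia.
have -> : (n - d.+1).+1 = (n - d)%N by lia.
rewrite IH; last by lia.
by congr wL; lia.
Qed.

Lemma wL_recur k : recur n.+1 c wL k.
Proof.
rewrite /recur big_ord_recl /= c0 mul1r subr0.
rewrite {1}/wL Ww_pred /Fw eqxx addrC; apply/eqP; rewrite subr_eq0; apply/eqP.
apply: eq_bigr => j _; rewrite Ww_shift; last by have := ltn_ord j; lia.
by rewrite /bump leq0n add1n; congr (_ * wL _); lia.
Qed.

Lemma wL_init : initw n.+1 wL.
Proof.
split; first by rewrite /wL /= /b0 eqxx.
move=> i hi; have := Ww_shift 0 (_ : (i <= n)%N); rewrite sub0r => <-; last by lia.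
by rewrite /= /b0 (_ : ((n - i)%N == n) = false) //; apply/eqP; lia.
Qed.

End Window.
Section Lambda.
Variable n : nat.
Local Notation M := n.+1.
Local Notation L := (SymLaurent n.+1).
Local Notation "x %:F" := (tofracF x).
Local Notation S := [tuple mesym M int i.+1 | i < M].

Definition toL (x : Frac M) : L := insubd 0 x.
Lemma toLK x : x \in symLaurent_pred M -> val (toL x) = x.
Proof. exact: insubdK. Qed.

Lemma polyF_in p : p \is symmetric -> p%:F \in symLaurent_pred M.
Proof.
move=> sp; apply/symLaurentP; exists 0%N, p; split => //.
by rewrite expr0 rmorph1 divr1.
Qed.

Definition eL (j : nat) : L := toL ((mesym M int j)%:F).
Lemma eL_val j : val (eL j) = (mesym M int j)%:F.
Proof. by rewrite toLK // polyF_in // mesym_sym. Qed.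

Definition einvL : L := toL (1 / (xprod M)%:F).
Lemma einvL_val : val einvL = 1 / (xprod M)%:F.
Proof.
rewrite toLK //; apply/symLaurentP; exists 1%N, 1; split; first exact: rpred1.
by rewrite expr1 rmorph1.
Qed.

Lemma xprodE : xprod M = mesym M int M.
Proof. by rewrite mesymnnE. Qed.

Lemma einvL_e : einvL * eL M = 1.
Proof.
apply: val_inj; rewrite rmorphM /= einvL_val eL_val -xprodE div1r.
by rewrite mulVf // xprod_neq0.
Qed.

Lemma eL0 : eL 0 = 1.
Proof. by apply: val_inj; rewrite eL_val mesym0E rmorph1. Qed.

Definition epsL (j : nat) : L := (-1) ^+ j * eL j.
Definition ciL : L := (-1) ^+ M * einvL.
Lemma epsL0 : epsL 0 = 1.
Proof. by rewrite /epsL eL0 mulr1. Qed.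
Lemma epsL_ci : epsL M * ciL = 1.
Proof.
rewrite /epsL /ciL mulrACA -exprMn mulrNN mulr1 expr1n mul1r.
by rewrite mulrC einvL_e.
Qed.

Definition wLL : int -> L := wL n epsL ciL.

Lemma wLL_recur k : recur M epsL wLL k.
Proof. exact: (wL_recur epsL0 epsL_ci). Qed.
Lemma wLL_init : initw M wLL.
Proof. exact: (wL_init epsL0 epsL_ci). Qed.

Lemma epsL_cseq j : (j <= M)%N -> epsL j = cseq wLL j.
Proof.
apply: recur_cseq; [exact: wLL_init|exact: epsL0|].
by move=> k _; apply: wLL_recur.
Qed.

Definition psi (t : {mpoly int[M]}) : L := mmap intr (fun i : 'I_M => eL i.+1) t.

Lemma psi_val t : val (psi t) = (t \mPo S)%:F.
Proof.
rewrite /psi /mmap comp_mpolyEX !rmorph_sum; apply: eq_bigr => mo _.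
rewrite rmorphM rmorph_int -mul_mpolyC rmorphM.
congr (_ * _).
  by rewrite -[in RHS](intz t@_mo) rmorph_int rmorph_int.
rewrite comp_mpolyX /mmap1 !rmorph_prod; apply: eq_bigr => i _.
by rewrite !rmorphXn /= eL_val tnth_mktuple.
Qed.

Lemma L_decomp (x : L) : exists t k, x = psi t * einvL ^+ k.
Proof.
have /symLaurentP [k [p [sp hx]]] := valP x.
have [t [ht _]] := sym_fundamental sp.
exists t, k; apply: val_inj; rewrite rmorphM rmorphXn /= psi_val ht hx einvL_val.
by rewrite rmorphXn /= div1r exprVn.
Qed.
End Lambda.
Section Gen.
Variable n : nat.
Local Notation M := n.+1.
Local Notation L := (SymLaurent n.+1).

Lemma psi_morph (B : comPzRingType) (f : {rmorphism L -> B}) t :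
  f (psi t) = \sum_(mo <- msupp t) (t@_mo)%:~R *
                 \prod_(i < M) f (eL n i.+1) ^+ mo i.
Proof.
rewrite /psi /mmap rmorph_sum; apply: eq_bigr => mo _.
rewrite rmorphM rmorph_int /mmap1 rmorph_prod; congr (_ * _).
by apply: eq_bigr => i _; rewrite rmorphXn.
Qed.

Lemma L_gen (B : comPzRingType) (f1 f2 : {rmorphism L -> B}) :
  (forall k, f1 (wLL n k) = f2 (wLL n k)) -> f1 =1 f2.
Proof.
move=> hw.
have hfw : f1 \o wLL n = f2 \o wLL n by apply: functional_extensionality.
have heps : forall j, (j <= M)%N -> f1 (epsL n j) = f2 (epsL n j).
  by move=> j hj; rewrite epsL_cseq // !cseq_morph hfw.
have he : forall j, (j <= M)%N -> f1 (eL n j) = f2 (eL n j).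
  move=> j hj; have -> : eL n j = (-1) ^+ j * epsL n j.
    by rewrite /epsL mulrA -exprMn mulrNN mulr1 expr1n mul1r.
  rewrite (rmorphM f1 ((-1)^+j) (epsL n j)) (rmorphM f2 ((-1)^+j) (epsL n j)) heps //.
  by rewrite !rmorphXn !rmorphN !rmorph1.
have hinv : f1 (einvL n) = f2 (einvL n).
  have h1 := congr1 f1 (einvL_e n); have h2 := congr1 f2 (einvL_e n).
  rewrite !rmorphM rmorph1 in h1; rewrite !rmorphM rmorph1 -he // in h2.
  by rewrite -[LHS]mulr1 -h2 mulrCA h1 mulr1.
move=> x; have [t [k ->]] := L_decomp x.
rewrite (rmorphM f1) (rmorphM f2) !rmorphXn hinv !psi_morph; congr (_ * _).
apply: eq_bigr => mo _; congr (_ * _); apply: eq_bigr => i _.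
by rewrite he ?ltn_ord.
Qed.
End Gen.
Lemma divD_same (F : fieldType) (x y a b : F) : a != 0 -> b != 0 ->
  x / a + y / b = (x * b + y * a) / (a * b).
Proof. by move=> a0 b0; field; rewrite a0 b0. Qed.

Section Exist.
Variable n : nat.
Local Notation M := n.+1.
Local Notation L := (SymLaurent n.+1).
Local Notation "x %:F" := (tofracF x).
Local Notation S := [tuple mesym M int i.+1 | i < M].
Local Notation X := (xprod M).

Definition symt (p : {mpoly int[M]}) : {mpoly int[M]} :=
  match excluded_middle_informative (p \is symmetric) with
  | left h => sval (sym_fundamental h)
  | right _ => 0 end.

Lemma symtP p : p \is symmetric -> symt p \mPo S = p.
Proof.
by rewrite /symt; case: excluded_middle_informative => // h _; case: sym_fundamental => t [].
Qed.

Lemma symt_eq p t : p \is symmetric -> t \mPo S = p -> symt p = t.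
Proof. by move=> sp ht; apply: msym_fundamental_un; rewrite symtP. Qed.

Variable B : comNzRingType.
Variables (b : nat -> B) (binv : B).
Hypothesis hb : b M * binv = 1.

Definition Ev p : B := mmap intr (fun i : 'I_M => b i.+1) (symt p).

Lemma Ev_D p q : p \is symmetric -> q \is symmetric -> Ev (p + q) = Ev p + Ev q.
Proof.
move=> sp sq; rewrite /Ev (@symt_eq (p + q) (symt p + symt q)) ?rpredD //.
  by rewrite rmorphD.
by rewrite raddfD /= !symtP.
Qed.

Lemma Ev_M p q : p \is symmetric -> q \is symmetric -> Ev (p * q) = Ev p * Ev q.
Proof.
move=> sp sq; rewrite /Ev (@symt_eq (p * q) (symt p * symt q)) ?rpredM //.
  by rewrite rmorphM.
by rewrite rmorphM /= !symtP.
Qed.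

Lemma Ev_1 : Ev 1 = 1.
Proof. by rewrite /Ev (@symt_eq 1 1) ?rpred1 ?rmorph1 // comp_mpoly1. Qed.

Lemma Ev_0 : Ev 0 = 0.
Proof. by rewrite /Ev (@symt_eq 0 0) ?rpred0 ?rmorph0 // comp_mpoly0. Qed.

Lemma Ev_e j : (0 < j <= M)%N -> Ev (mesym M int j) = b j.
Proof.
move=> hj; have ji : (j.-1 < M)%N by lia.
rewrite /Ev (@symt_eq _ 'X_(Ordinal ji)) ?mesym_sym //.
  by rewrite mmapX mmap1U /=; congr b; lia.
rewrite comp_mpolyXU -tnth_nth tnth_mktuple /= prednK //; lia.
Qed.

Lemma Ev_X k : Ev (X ^+ k) = b M ^+ k.
Proof.
elim: k => [|k IH]; first by rewrite !expr0 Ev_1.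
by rewrite !exprS Ev_M ?rpredX ?xprod_sym // IH (xprodE n) Ev_e // leqnn.
Qed.

Lemma rep_ex (x : L) : exists k, exists p, p \is symmetric /\
   val x = p%:F / (X ^+ k)%:F.
Proof. by have /symLaurentP := valP x. Qed.

Definition rk (x : L) : nat := sval (constructive_indefinite_description _ (rep_ex x)).
Definition rp (x : L) : {mpoly int[M]} :=
  sval (constructive_indefinite_description _
     (svalP (constructive_indefinite_description _ (rep_ex x)))).
Lemma rpP x : rp x \is symmetric /\ val x = (rp x)%:F / (X ^+ rk x)%:F.
Proof.
rewrite /rp /rk; set e1 := constructive_indefinite_description _ (rep_ex x).
exact: (svalP (constructive_indefinite_description _ (svalP e1))).
Qed.

Definition Phi (x : L) : B := Ev (rp x) * binv ^+ rk x.

Lemma nzX k : (X ^+ k)%:F != 0 :> Frac M.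
Proof. by rewrite rmorphXn expf_neq0 // xprod_neq0. Qed.

Lemma frac_eq p q k l : p%:F / (X ^+ k)%:F = q%:F / (X ^+ l)%:F ->
  p * X ^+ l = q * X ^+ k.
Proof.
move=> h; apply/eqP; rewrite -tofrac_eq !rmorphM /=; apply/eqP.
transitivity (p%:F / (X ^+ k)%:F * (X ^+ k)%:F * (X ^+ l)%:F).
  by rewrite divfK // nzX.
rewrite h; transitivity (q%:F / (X ^+ l)%:F * (X ^+ l)%:F * (X ^+ k)%:F).
  by rewrite mulrAC.
by rewrite divfK // nzX.
Qed.

Lemma hbk j : b M ^+ j * binv ^+ j = 1.
Proof. by rewrite -exprMn hb expr1n. Qed.

Lemma Phi_rep x k p : p \is symmetric -> val x = p%:F / (X ^+ k)%:F ->
  Phi x = Ev p * binv ^+ k.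
Proof.
move=> sp hx; case: (rpP x) => sq hq; rewrite /Phi.
have e := frac_eq (etrans (esym hx) hq).
have := congr1 Ev e; rewrite !Ev_M ?rpredX ?xprod_sym // !Ev_X => e'.
transitivity (Ev (rp x) * b M ^+ k * binv ^+ k * binv ^+ rk x).
  by rewrite -(mulrA (Ev (rp x))) hbk mulr1.
rewrite -e' -!mulrA; congr (_ * _).
by rewrite mulrCA hbk mulr1.
Qed.

Lemma PhiD x y : Phi (x + y) = Phi x + Phi y.
Proof.
case: (rpP x) => sp hx; case: (rpP y) => sq hy.
set k := rk x in hx *; set l := rk y in hy *; set p := rp x in sp hx *; set q := rp y in sq hy *.
rewrite (@Phi_rep (x + y) (k + l) (p * X ^+ l + q * X ^+ k)); last first.
- rewrite rmorphD /= hx hy exprD !rmorphD !rmorphM /=.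
  by rewrite divD_same ?nzX.
- by rewrite rpredD // rpredM // rpredX // xprod_sym.
rewrite /Phi -/k -/l -/p -/q Ev_D ?rpredM ?rpredX ?xprod_sym //.
rewrite !Ev_M ?rpredX ?xprod_sym // !Ev_X exprD mulrDl; congr (_ + _).
  by rewrite -!mulrA; congr (_ * _); rewrite mulrCA hbk mulr1.
by rewrite -!mulrA; congr (_ * _); rewrite mulrA hbk mul1r.
Qed.

Lemma PhiM x y : Phi (x * y) = Phi x * Phi y.
Proof.
case: (rpP x) => sp hx; case: (rpP y) => sq hy.
set k := rk x in hx *; set l := rk y in hy *; set p := rp x in sp hx *; set q := rp y in sq hy *.
rewrite (@Phi_rep (x * y) (k + l) (p * q)); last first.
- rewrite rmorphM /= hx hy exprD !rmorphM /=.
  by rewrite invfM mulrACA.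
- by rewrite rpredM.
rewrite /Phi -/k -/l -/p -/q Ev_M // exprD.
by rewrite -!mulrA; congr (_ * _); rewrite mulrCA.
Qed.

Lemma Phi1 : Phi 1 = 1.
Proof.
by rewrite (@Phi_rep 1 0 1) ?rpred1 ?Ev_1 ?mulr1 // rmorph1 expr0 !rmorph1 divr1.
Qed.

Lemma Phi0 : Phi 0 = 0.
Proof.
by rewrite (@Phi_rep 0 0 0) ?rpred0 ?Ev_0 ?mul0r // rmorph0 expr0 rmorph0 mul0r.
Qed.

Lemma Phi_e j : (0 < j <= M)%N -> Phi (eL n j) = b j.
Proof.
move=> hj; rewrite (@Phi_rep _ 0 (mesym M int j)) ?mesym_sym ?Ev_e ?mulr1 //.
by rewrite eL_val expr0 rmorph1 divr1.
Qed.

Lemma Phi_inv : Phi (einvL n) = binv.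
Proof.
rewrite (@Phi_rep _ 1 1) ?rpred1 ?Ev_1 ?mul1r ?expr1 //.
by rewrite einvL_val div1r.
Qed.

Lemma exist_nz : exists f : {rmorphism L -> B},
  (forall j, (0 < j <= M)%N -> f (eL n j) = b j) /\ f (einvL n) = binv.
Proof.
exists (@mkRM L B Phi (Phi0, PhiD) (Phi1, PhiM)); split.
  exact: Phi_e.
exact: Phi_inv.
Qed.
End Exist.
Definition nzB (B : comPzRingType) (h : (1:B) != 0) : Type := B.
HB.instance Definition _ (B : comPzRingType) (h : (1:B) != 0) := GRing.ComPzRing.on (nzB h).
HB.instance Definition _ (B : comPzRingType) (h : (1:B) != 0) :=
  GRing.PzSemiRing_isNonZero.Build (nzB h) h.

Lemma recur0_inv (B : comPzRingType) m (c : nat -> B) (w : int -> B) :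
  (0 < m)%N -> initw m w -> c 0%N = 1 -> recur m c w 0 -> c m * w (0 - m%:Z) = -1.
Proof.
move=> m0 [w0 wn] c0 /recur_back ->; congr (- _).
case: m m0 wn => // m _ wn.
rewrite big_ord_recl /= c0 subr0 w0 mulr1 big1 ?addr0 // => j _.
have -> : 0 - ((bump 0 j : nat)%:Z) = - ((j.+1)%:Z) by rewrite /bump leq0n add1n sub0r.
by rewrite wn ?mulr0 //; have := ltn_ord j; lia.
Qed.

Section Final.
Variable n : nat.
Local Notation M := n.+1.
Local Notation L := (SymLaurent n.+1).

Lemma Ex_nz (B : comNzRingType) (w : int -> B) : initw M w ->
  (forall I : 'I_M.+1 -> int, RI w I = 0) ->
  exists f : {rmorphism L -> B}, forall k, f (wLL n k) = w k.
Proof.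
move=> hi hRI.
set cB := cseq w.
have hr : forall k, recur M cB w k.
  by apply: recur_of_RI => // k hk; apply: cseq_recur_small.
have hc0 : cB 0%N = 1 by [].
have hinv : cB M * (- w (0 - M%:Z)) = 1.
  by rewrite mulrN (recur0_inv _ hi hc0 (hr 0)) //; exact: opprK.
pose b j := (-1) ^+ j * cB j.
pose binv := (-1) ^+ M * (- w (0 - M%:Z)).
have hb : b M * binv = 1.
  by rewrite /b /binv mulrACA -exprMn mulrNN mulr1 expr1n mul1r.
have [f [fe finv]] := exist_nz hb.
exists f.
have feps : forall j, (j <= M)%N -> f (epsL n j) = cB j.
  case=> [|j] hj; first by rewrite epsL0 rmorph1.
  rewrite /epsL (rmorphM f) fe // rmorphXn rmorphN rmorph1 /b mulrA.
  by rewrite -exprMn mulrNN mulr1 expr1n mul1r.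
apply: (@rec_uniq B M cB (- w (0 - M%:Z)) (fun k => f (wLL n k)) w hc0).
- by rewrite mulrC.
- move=> k; have := congr1 f (wLL_recur n k); rewrite rmorph_sum rmorph0 /recur => e.
  by rewrite -[in RHS]e; apply: eq_bigr => j _; rewrite rmorphM feps // -ltnS ltn_ord.
- exact: hr.
- case: (wLL_init n) => l0 ln; case: hi => w0 wn.
  case=> [|i] hi; first by rewrite oppr0 l0 w0 rmorph1.
  by rewrite ln ?wn ?rmorph0.
Qed.

Lemma Ex (B : comPzRingType) (w : int -> B) : initw M w ->
  (forall I : 'I_M.+1 -> int, RI w I = 0) ->
  exists f : {rmorphism L -> B}, forall k, f (wLL n k) = w k.
Proof.
move=> hi hRI; case: (eqVneq (1 : B) 0) => h.
  exists (@mkRM L B (fun _ => 0) (erefl, fun _ _ => esym (addr0 0))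
            (esym h, fun _ _ => esym (mulr0 0))).
  move=> k; have z : w k = 0 by rewrite -[w k]mulr1 h mulr0.
  by rewrite z.
have [f hf] := @Ex_nz (nzB h) w hi hRI.
exists (@mkRM L B (fun x => f x : B) (rmorph0 f, rmorphD f) (rmorph1 f, rmorphM f)).
exact: hf.
Qed.
End Final.
Lemma useq_morph (B B' : comPzRingType) (f : {rmorphism B -> B'}) (c : nat -> B) i :
  f (useq c i) = useq (fun k => f (c k)) i.
Proof. by case: i => [[|k]|k] /=; rewrite ?rmorph1 ?rmorph0. Qed.

Lemma vseq_morph (B B' : comPzRingType) (f : {rmorphism B -> B'}) (c : nat -> B) i :
  f (vseq c i) = vseq (fun k => f (c k)) i.
Proof. by case: i => [k|k] /=; rewrite ?rmorph0. Qed.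

Lemma w_plus_morph m (B B' : comPzRingType) (f : {rmorphism B -> B'}) g k :
  f (w_plus m g k) = w_plus m (fun x => f (g x)) k.
Proof. by rewrite /w_plus rmorphB useq_morph vseq_morph. Qed.

Lemma w_pm_morph m (B B' : comPzRingType) (f : {rmorphism B -> B'}) g k :
  f (w_pm m g k) = w_pm m (fun x => f (g x)) k.
Proof. by rewrite /w_pm rmorphB rmorphM !useq_morph. Qed.

Lemma RI_ext (B : comPzRingType) (p : nat) (z1 z2 : int -> B) (I : 'I_p -> int) :
  z1 =1 z2 -> RI z1 I = RI z2 I.
Proof. by move=> e; rewrite /RI; congr (\det _); apply/matrixP => a b; rewrite !mxE e. Qed.

Arguments wL : simpl never.
Arguments Ww : simpl never.

Section Pres.
Variable n : nat.
Local Notation M := n.+1.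
Local Notation L := (SymLaurent n.+1).

Lemma negM_sub (k : nat) : - M%:Z - (k%:Z) = Negz (n + k).
Proof. by rewrite NegzE; lia. Qed.

Definition g_plus (x : gensUplus) : L :=
  match x with
  | inl k => wLL n (k.+1)%:Z
  | inr k => - wLL n (- M%:Z - k%:Z)
  end.

Lemma w_plus_g i : w_plus M g_plus i = wLL n i.
Proof.
case: (wLL_init n) => l0 ln.
rewrite /w_plus; case: i => [[|k]|k].
- by rewrite negM_sub /= subr0 l0.
- by rewrite negM_sub /= subr0.
- case: (ltnP k n) => hk.
    have -> : - M%:Z - Negz k = Negz (n - k.+1) by rewrite !NegzE; lia.
    rewrite /= subr0 NegzE ln //; lia.
  have -> : - M%:Z - Negz k = Posz (k - n) by rewrite NegzE; lia.
  rewrite /= sub0r opprK; congr wLL; rewrite NegzE; lia.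
Qed.

Lemma init_plus (B : comPzRingType) (h : gensUplus -> B) : initw M (w_plus M h).
Proof.
split; first by rewrite /w_plus negM_sub /= subr0.
move=> [|i] hi //; rewrite /w_plus.
have -> : - ((i.+1)%:Z) = Negz i by rewrite NegzE.
have -> : - M%:Z - Negz i = Negz (n - i.+1) by rewrite !NegzE; lia.
by rewrite /= subr0.
Qed.

Lemma pres_plus : presents g_plus (rel_Uplus M).
Proof.
have eg : w_plus M g_plus =1 wLL n := w_plus_g.
split.
  move=> I; rewrite (RI_ext I eg).
  exact: (RI_of_recur (epsL0 n) (wLL_recur n)).
move=> B h hrel.
have [f hf] := Ex (init_plus h) hrel.
split.
  exists f => -[k|k] /=.
    by rewrite hf /w_plus negM_sub /= subr0.
  rewrite rmorphN hf /w_plus negM_sub /=.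
  have -> : - M%:Z - Negz (n + k) = Posz k by rewrite NegzE; lia.
  by rewrite /= sub0r opprK.
move=> f1 f2 h1 h2; apply: L_gen => k.
rewrite -!eg !w_plus_morph; congr w_plus.
by apply: functional_extensionality => x; rewrite h1 h2.
Qed.

Definition g_pm (x : gensUpm) : L :=
  match x with
  | None => - wLL n (- M%:Z)
  | Some (inl k) => wLL n (k.+1)%:Z
  | Some (inr k) => - epsL n M * wLL n (- M%:Z - (k.+1)%:Z)
  end.

Lemma epsL_wM : epsL n M * wLL n (- M%:Z) = -1.
Proof.
rewrite -sub0r; apply: recur0_inv => //; [exact: wLL_init|exact: epsL0|exact: wLL_recur].
Qed.

Lemma w_pm_g i : w_pm M g_pm i = wLL n i.
Proof.
case: (wLL_init n) => l0 ln.
rewrite /w_pm; case: i => [[|k]|k].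
- by rewrite negM_sub /= mulr0 subr0 l0.
- by rewrite negM_sub /= mulr0 subr0.
- case: (ltngtP k n) => hk.
  + have -> : - M%:Z - Negz k = Negz (n - k.+1) by rewrite !NegzE; lia.
    rewrite /= mulr0 subr0 NegzE ln //; lia.
  + have -> : - M%:Z - Negz k = Posz (k - n) by rewrite NegzE; lia.
    have -> : (k - n)%N = (k - n.+1).+1 by lia.
    rewrite /= sub0r mulNr opprK mulNr mulrN mulrA (mulrC (wLL n _)) epsL_wM mulN1r opprK.
    congr wLL; rewrite !NegzE; lia.
  + subst k; have -> : - M%:Z - Negz n = 0 by rewrite NegzE; lia.
    by rewrite /= mulr1 sub0r opprK NegzE.
Qed.

Lemma init_pm (B : comPzRingType) (h : gensUpm -> B) : initw M (w_pm M h).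
Proof.
split; first by rewrite /w_pm negM_sub /= mulr0 subr0.
move=> [|i] hi //; rewrite /w_pm.
have -> : - ((i.+1)%:Z) = Negz i by rewrite NegzE.
have -> : - M%:Z - Negz i = Negz (n - i.+1) by rewrite !NegzE; lia.
by rewrite /= mulr0 subr0.
Qed.

Lemma pres_pm : presents g_pm (rel_Upm M).
Proof.
have eg : w_pm M g_pm =1 wLL n := w_pm_g.
split.
  move=> I; rewrite (RI_ext I eg).
  exact: (RI_of_recur (epsL0 n) (wLL_recur n)).
move=> B h hrel.
have [f hf] := Ex (init_pm h) hrel.
have hwM : f (wLL n (- M%:Z)) = - h None.
  by rewrite hf /w_pm subrr /= mulr1 sub0r.
have hct : f (epsL n M) * h None = 1.
  have := congr1 f epsL_wM; rewrite rmorphM hwM rmorphN rmorph1 mulrN.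
  by move/oppr_inj.
split.
  exists f => -[[k|k]|] /=.
  - by rewrite hf /w_pm negM_sub /= mulr0 subr0.
  - rewrite rmorphM rmorphN hf /w_pm.
    have -> : - M%:Z - (k.+1)%:Z = Negz (n + k.+1) by rewrite NegzE; lia.
    have -> : - M%:Z - Negz (n + k.+1) = Posz k.+1 by rewrite NegzE; lia.
    by rewrite /= sub0r mulrN mulNr opprK mulrA hct mul1r.
  - by rewrite rmorphN hwM opprK.
move=> f1 f2 h1 h2; apply: L_gen => k.
rewrite -!eg !w_pm_morph; congr w_pm.
by apply: functional_extensionality => x; rewrite h1 h2.
Qed.
End Pres.

Theorem mainTheorem6 (m : nat) : (1 <= m)%N ->
  (exists g : gensUplus -> SymLaurent m, presents g (rel_Uplus m)) /\
  (exists g : gensUpm -> SymLaurent m, presents g (rel_Upm m)).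
Proof.
case: m => // n _; split.
  by exists (g_plus n); exact: pres_plus.
by exists (g_pm n); exact: pres_pm.
Qed.
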